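(* For any $(2^{nR_1},2^{nR_2},n)$ code for the state-dependent discrete memoryless MAC with generalized feedback, with arbitrary state estimators $\hat S_k^n=\psi_k^n(X_k^n,Z_k^n)$, the average distortion of estimator $k\in\{1,2\}$ satisfies $$d_k^{(n)}=\mathbb E\Big[\frac1n\sum_{i=1}^nd_k(S_{ki},\hat S_{ki})\Big]\ \ge\ \frac1n\sum_{i=1}^n\mathbb E[c_k(X_{1i},X_{2i})],$$ where the expectation on the right is with respect to the distribution of $(X_{1i},X_{2i})$ induced by uniformly distributed independent messages, the states and the channel.
   Context: Model: finite alphabets $\mathcal X_k,\mathcal Z_k,\mathcal Y$, state alphabet $\mathcal S=\mathcal S_1\times\mathcal S_2$, reconstruction alphabets $\hat{\mathcal S}_k$; states $S_i=(S_{1i},S_{2i})$ i.i.d. $\sim P_S$, independent of the messages; memoryless channel $P_{YZ_1Z_2|X_1X_2S}$; encoders $x_{ki}=\phi_{ki}(w_k,z_k^{i-1})$; bounded distortion functions $d_k:\mathcal S_k\times\hat{\mathcal S}_k\to[0,\infty)$. Idealized cost: $$c_k(x_1,x_2)=\sum_{z_1,z_2}\min_{\hat s\in\hat{\mathcal S}_k}\sum_{s=(s_1,s_2)\in\mathcal S}P_S(s)P_{Z_1Z_2|X_1X_2S}(z_1,z_2|x_1,x_2,s)\,d_k(s_k,\hat s),$$ i.e. the minimum expected distortion in estimating $S_k$ from $(X_1,X_2,Z_1,Z_2)$ given $X_1=x_1,X_2=x_2$, when $S\sim P_S$ is independent of the inputs. *)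

(* Defs.v *)
From HB Require Import structures.
From mathcomp Require Import all_boot all_order all_algebra.
Set Implicit Arguments. Unset Strict Implicit. Unset Printing Implicit Defensive.
Import Order.TTheory GRing.Theory Num.Theory.
Local Open Scope ring_scope.

(* Minimum of F over a finite type T (0 if T is empty, irrelevant case). *)
Definition fmin (R : realDomainType) (T : finType) (F : T -> R) : R :=
  match enum T with
  | [::] => 0
  | t :: _ => \big[Order.min/F t]_(s : T) F s
  end.

(* z^{i-1} : first i letters (indices 0..i-1) of a length-n sequence. *)
Definition prefix (T : Type) (n : nat) (i : 'I_n) (z : {ffun 'I_n -> T})
  : {ffun 'I_i -> T} :=
  [ffun j : 'I_i => z (widen_ord (ltnW (ltn_ord i)) j)].

(* Encoder k of an n-letter code with M messages: x_{ki} = phi_{ki}(w, z^{i-1}). *)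
Definition encoder (n M : nat) (Z X : Type) :=
  forall i : 'I_n, 'I_M -> {ffun 'I_i -> Z} -> X.

Definition inputs (n M : nat) (Z X : Type) (enc : encoder n M Z X)
  (w : 'I_M) (z : {ffun 'I_n -> Z}) : {ffun 'I_n -> X} :=
  [ffun i => enc i w (prefix i z)].

Section Model.
Variables (R : realFieldType) (X1 X2 Z1 Z2 Y S1 S2 : finType) (n M1 M2 : nat).
Variable PS : S1 * S2 -> R.
(* channel P_{Y Z1 Z2 | X1 X2 S}, output triple encoded as (y, z1, z2) *)
Variable W : X1 -> X2 -> S1 * S2 -> Y * Z1 * Z2 -> R.
Variables (enc1 : encoder n M1 Z1 X1) (enc2 : encoder n M2 Z2 X2).

Definition z1seq (o : {ffun 'I_n -> Y * Z1 * Z2}) : {ffun 'I_n -> Z1} :=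
  [ffun i => (o i).1.2].
Definition z2seq (o : {ffun 'I_n -> Y * Z1 * Z2}) : {ffun 'I_n -> Z2} :=
  [ffun i => (o i).2].
Definition x1seq w1 o := inputs enc1 w1 (z1seq o).
Definition x2seq w2 o := inputs enc2 w2 (z2seq o).

(* Joint probability of (W1, W2, S^n, (Y,Z1,Z2)^n) under uniform independent
   messages, i.i.d. states and the memoryless channel used causally. *)
Definition joint (w1 : 'I_M1) (w2 : 'I_M2) (s : {ffun 'I_n -> S1 * S2})
  (o : {ffun 'I_n -> Y * Z1 * Z2}) : R :=
  (M1 * M2)%:R^-1 *
  \prod_(i < n) (PS (s i) * W (x1seq w1 o i) (x2seq w2 o i) (s i) (o i)).

Definition expect
  (f : 'I_M1 -> 'I_M2 -> {ffun 'I_n -> S1 * S2} -> {ffun 'I_n -> Y * Z1 * Z2} -> R)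
  : R :=
  \sum_(w1 : 'I_M1) \sum_(w2 : 'I_M2) \sum_(s : {ffun 'I_n -> S1 * S2})
   \sum_(o : {ffun 'I_n -> Y * Z1 * Z2}) joint w1 w2 s o * f w1 w2 s o.
End Model.

Definition chZ (R : realFieldType) (X1 X2 Z1 Z2 Y S1 S2 : finType)
  (W : X1 -> X2 -> S1 * S2 -> Y * Z1 * Z2 -> R)
  (x1 : X1) (x2 : X2) (s : S1 * S2) (z1 : Z1) (z2 : Z2) : R :=
  \sum_(y : Y) W x1 x2 s (y, z1, z2).

Definition cost1 (R : realFieldType) (X1 X2 Z1 Z2 Y S1 S2 Sh : finType)
  (PS : S1 * S2 -> R) (W : X1 -> X2 -> S1 * S2 -> Y * Z1 * Z2 -> R)
  (d : S1 -> Sh -> R) (x1 : X1) (x2 : X2) : R :=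
  \sum_(z1 : Z1) \sum_(z2 : Z2)
    fmin (fun sh : Sh => \sum_(s : S1 * S2)
            PS s * chZ W x1 x2 s z1 z2 * d s.1 sh).

Definition cost2 (R : realFieldType) (X1 X2 Z1 Z2 Y S1 S2 Sh : finType)
  (PS : S1 * S2 -> R) (W : X1 -> X2 -> S1 * S2 -> Y * Z1 * Z2 -> R)
  (d : S2 -> Sh -> R) (x1 : X1) (x2 : X2) : R :=
  \sum_(z1 : Z1) \sum_(z2 : Z2)
    fmin (fun sh : Sh => \sum_(s : S1 * S2)
            PS s * chZ W x1 x2 s z1 z2 * d s.2 sh).

(* Main.v *)
Require Import Defs.
From HB Require Import structures.
From mathcomp Require Import all_boot all_order all_algebra.
From mathcomp Require Import zify ring.
Set Implicit Arguments. Unset Strict Implicit. Unset Printing Implicit Defensive.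
Import Order.TTheory GRing.Theory Num.Theory.
Local Open Scope ring_scope.

Lemma fmin_le (R : realDomainType) (T : finType) (F : T -> R) x : fmin F <= F x.
Proof.
rewrite /fmin; have : x \in enum T by rewrite mem_enum.
case: (enum T) => [//|t s _]; exact: bigmin_le.
Qed.

Section Upd.
Variables (R : realFieldType) (T : finType) (n : nat).
Definition upd (o : {ffun 'I_n -> T}) (j : 'I_n) (t : T) : {ffun 'I_n -> T} :=
  [ffun k => if k == j then t else o k].

Lemma upd_same o j t : upd o j t j = t.
Proof. by rewrite ffunE eqxx. Qed.
Lemma upd_other o j t k : k != j -> upd o j t k = o k.
Proof. by rewrite ffunE => /negPf ->. Qed.
Lemma upd_upd o j a b : upd (upd o j a) j b = upd o j b.
Proof. by apply/ffunP=> k; rewrite !ffunE; case: eqP. Qed.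
Lemma upd_id o j : upd o j (o j) = o.
Proof. by apply/ffunP => k; rewrite ffunE; case: eqP => // ->. Qed.
Lemma upd_eqo o j t : (upd o j t == o) = (o j == t).
Proof.
apply/eqP/eqP => [H|<-]; last exact: upd_id.
by rewrite -{1}H upd_same.
Qed.
Lemma upd_comm o i j t t' : i != j -> upd (upd o j t) i t' = upd (upd o i t') j t.
Proof.
move=> ij; apply/ffunP => k; rewrite !ffunE.
case: (eqVneq k i) => [->|ki]; first by rewrite (negPf ij).
done.
Qed.

Lemma sum_upd (F : {ffun 'I_n -> T} -> R) j t0 :
  \sum_(o : {ffun 'I_n -> T}) F o = \sum_(o : {ffun 'I_n -> T}) (o j == t0)%:R * \sum_t F (upd o j t).
Proof.
under [RHS]eq_bigr do rewrite mulr_sumr.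
rewrite exchange_big /=.
rewrite (partition_big (fun o : {ffun 'I_n -> T} => o j) xpredT) //=.
apply: eq_bigr => t _.
have -> : \sum_(o : {ffun 'I_n -> T}) (o j == t0)%:R * F (upd o j t) = \sum_(o : {ffun 'I_n -> T} | o j == t0) F (upd o j t).
  by rewrite [RHS]big_mkcond /=; apply: eq_bigr => o _; rewrite mulr_natl mulrb.
rewrite (reindex_onto (fun o => upd o j t) (fun o => upd o j t0)) /=.
  by apply: eq_bigl => o; rewrite upd_same eqxx upd_upd upd_eqo.
by move=> o /eqP <-; rewrite upd_upd upd_id.
Qed.

Lemma sum_SI (G K : {ffun 'I_n -> T} -> R) j t0 :
  (forall o t, G (upd o j t) = G o) -> (forall o, \sum_t K (upd o j t) = 1) ->
  \sum_(o : {ffun 'I_n -> T}) G o * K o = \sum_(o : {ffun 'I_n -> T}) G o * (o j == t0)%:R.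
Proof.
move=> HG HK; rewrite (sum_upd _ j t0); apply: eq_bigr => o _.
under eq_bigr do rewrite HG.
by rewrite -mulr_sumr HK mulr1 mulrC.
Qed.

Definition dep (H : {ffun 'I_n -> T} -> R) (m : nat) :=
  forall o o' : {ffun 'I_n -> T}, (forall k : 'I_n, (k < m)%N -> o k = o' k) -> H o = H o'.

Lemma depW H m m' : (m <= m')%N -> dep H m -> dep H m'.
Proof. by move=> mm' hH o o' e; apply: hH => k km; apply: e; apply: leq_trans mm'. Qed.

Lemma split_ge m (mn : (m < n)%N) (F : 'I_n -> R) :
  \prod_(j : 'I_n | (m <= j)%N) F j = F (Ordinal mn) * \prod_(j : 'I_n | (m < j)%N) F j.
Proof.
rewrite (bigD1 (Ordinal mn)) //=; congr (_ * _); apply: eq_bigl => j.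
rewrite -val_eqE /= [(m < j)%N]ltn_neqAle andbC; congr (_ && _).
by rewrite eq_sym.
Qed.

Lemma ML (m0 : nat) (K : 'I_n -> {ffun 'I_n -> T} -> R) t0 :
  (forall j : 'I_n, (m0 <= j)%N -> forall o, \sum_t K j (upd o j t) = 1) ->
  (forall j : 'I_n, (m0 <= j)%N -> dep (K j) j.+1) ->
  forall H, dep H m0 ->
  \sum_(o : {ffun 'I_n -> T}) H o * \prod_(j : 'I_n | (m0 <= j)%N) K j o =
  \sum_(o : {ffun 'I_n -> T}) H o * \prod_(j : 'I_n | (m0 <= j)%N) (o j == t0)%:R.
Proof.
move=> hK hD.
suff: forall k m, (m0 <= m)%N -> (n - m)%N = k -> forall H, dep H m ->
  \sum_(o : {ffun 'I_n -> T}) H o * \prod_(j : 'I_n | (m <= j)%N) K j o =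
  \sum_(o : {ffun 'I_n -> T}) H o * \prod_(j : 'I_n | (m <= j)%N) (o j == t0)%:R.
  by move=> /(_ _ m0 (leqnn _) erefl).
elim=> [|k IH] m m0m nm H hH.
  apply: eq_bigr => o _; rewrite !big_pred0 // => j; apply: negbTE; rewrite -ltnNge;
  apply: leq_trans (ltn_ord j) _; lia.
have mn : (m < n)%N by lia.
set j0 := Ordinal mn.
under eq_bigr do rewrite (split_ge mn).
under [RHS]eq_bigr do rewrite (split_ge mn).
under eq_bigr do rewrite mulrA.
rewrite (IH m.+1); [|lia|lia|].
2:{ move=> o o' e; congr (_ * _); first by apply: hH => k' km; apply: e; lia.
    by apply: (hD j0) => //= k' km; apply: e. }
transitivity (\sum_(o : {ffun 'I_n -> T}) (H o * \prod_(j : 'I_n | (m < j)%N) (o j == t0)%:R) * K j0 o).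
  by apply: eq_bigr => o _; rewrite -mulrA [K _ _ * _]mulrC mulrA.
transitivity (\sum_(o : {ffun 'I_n -> T}) (H o * \prod_(j : 'I_n | (m < j)%N) (o j == t0)%:R) * (o j0 == t0)%:R); last first.
  by apply: eq_bigr => o _; rewrite mulrCA mulrC.
apply: (sum_SI (G := fun o => H o * \prod_(j : 'I_n | (m < j)%N) (o j == t0)%:R) (j := j0)).
  move=> o t; congr (_ * _).
    by apply: hH => k' km; rewrite upd_other // -val_eqE /= neq_ltn km.
  apply: eq_bigr => j mj; rewrite upd_other // -val_eqE /= neq_ltn mj orbT //.
by move=> o; apply: hK.
Qed.
End Upd.

Unset Implicit Arguments. Set Strict Implicit.

Lemma sum_triple (R : realFieldType) (Y Z1 Z2 : finType) (f : Y * Z1 * Z2 -> R) :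
  \sum_t f t = \sum_(y : Y) \sum_(z1 : Z1) \sum_(z2 : Z2) f (y, z1, z2).
Proof.
rewrite [RHS]pair_bigA /= [RHS]pair_bigA /=.
by apply: eq_bigr => [[[y z1] z2]] _.
Qed.

Lemma prod_split3 (R : realFieldType) n (F : 'I_n -> R) i :
  \prod_(j < n | j != i) F j =
  \prod_(j < n | (j < i)%N) F j * \prod_(j < n | (i < j)%N) F j.
Proof.
rewrite (bigID (fun j : 'I_n => (j < i)%N)) /=; congr (_ * _); apply: eq_bigl => j;
by rewrite -val_eqE /=; case: ltngtP.
Qed.

Lemma exch3 (R : realFieldType) (A B C : finType) (F : A -> B -> C -> R) :
  \sum_a \sum_b \sum_c F a b c = \sum_b \sum_c \sum_a F a b c.
Proof. rewrite exchange_big; apply: eq_bigr => b _; exact: exchange_big. Qed.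

Section M.
Variables (R : realFieldType) (X1 X2 Z1 Z2 Y S1 S2 Sh : finType) (n M1 M2 : nat).
Variable PS : S1 * S2 -> R.
Variable W : X1 -> X2 -> S1 * S2 -> Y * Z1 * Z2 -> R.
Variables (enc1 : encoder n M1 Z1 X1) (enc2 : encoder n M2 Z2 X2).
Hypothesis hPS0 : forall s, 0 <= PS s.
Hypothesis hPS1 : \sum_s PS s = 1.
Hypothesis hW0 : forall x1 x2 s o, 0 <= W x1 x2 s o.
Hypothesis hW1 : forall x1 x2 s, \sum_o W x1 x2 s o = 1.
Variable d : S1 * S2 -> Sh -> R.
Hypothesis hd : forall s sh, 0 <= d s sh.

Local Notation T := (Y * Z1 * Z2)%type.
Local Notation OT := {ffun 'I_n -> T}.

Lemma x1dep w1 (o o' : OT) (j : 'I_n) :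
  (forall k : 'I_n, (k < j)%N -> o k = o' k) ->
  x1seq enc1 w1 o j = x1seq enc1 w1 o' j.
Proof.
move=> e; rewrite /x1seq /inputs !ffunE; congr (enc1 j w1 _).
apply/ffunP => k; rewrite !ffunE /= e //.
exact: (@ltn_ord j k).
Qed.

Lemma x2dep w2 (o o' : OT) (j : 'I_n) :
  (forall k : 'I_n, (k < j)%N -> o k = o' k) ->
  x2seq enc2 w2 o j = x2seq enc2 w2 o' j.
Proof.
move=> e; rewrite /x2seq /inputs !ffunE; congr (enc2 j w2 _).
apply/ffunP => k; rewrite !ffunE /= e //.
exact: (@ltn_ord j k).
Qed.

Lemma upd_agree (o o' : OT) m i t :
  (forall k : 'I_n, (k < m)%N -> o k = o' k) ->
  forall k : 'I_n, (k < m)%N -> upd o i t k = upd o' i t k.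
Proof. by move=> e k km; rewrite !ffunE e. Qed.

Lemma upd_below (o : OT) m (i : 'I_n) t :
  (m <= i)%N -> forall k : 'I_n, (k < m)%N -> upd o i t k = o k.
Proof.
move=> mi k km; rewrite upd_other // -val_eqE /= neq_ltn.
by rewrite (leq_trans km mi).
Qed.

Lemma x1upd w1 (o : OT) (i : 'I_n) t (j : 'I_n) : (j <= i)%N -> x1seq enc1 w1 (upd o i t) j = x1seq enc1 w1 o j.
Proof. by move=> ji; apply: x1dep; apply: upd_below. Qed.
Lemma x2upd w2 (o : OT) (i : 'I_n) t (j : 'I_n) : (j <= i)%N -> x2seq enc2 w2 (upd o i t) j = x2seq enc2 w2 o j.
Proof. by move=> ji; apply: x2dep; apply: upd_below. Qed.

Definition Kj w1 w2 (j : 'I_n) (o : OT) : R :=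
  \sum_s PS s * W (x1seq enc1 w1 o j) (x2seq enc2 w2 o j) s (o j).

Lemma Kj_ge0 w1 w2 j o : 0 <= Kj w1 w2 j o.
Proof. by apply: sumr_ge0 => s _; apply: mulr_ge0. Qed.

Lemma Kj_kernel w1 w2 j o : \sum_t Kj w1 w2 j (upd o j t) = 1.
Proof.
rewrite /Kj exchange_big /= -[RHS]hPS1; apply: eq_bigr => s _.
rewrite -mulr_sumr.
under eq_bigr do rewrite x1upd // x2upd // upd_same.
by rewrite hW1 mulr1.
Qed.

Lemma Kj_dep w1 w2 j : dep (Kj w1 w2 j) j.+1.
Proof.
move=> o o' e; rewrite /Kj (x1dep w1 o o'); last by move=> k kj; apply: e; exact: ltnW.
rewrite (x2dep w2 o o'); last by move=> k kj; apply: e; exact: ltnW.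
by rewrite e.
Qed.

Lemma Kj_z w1 w2 j (o o' : OT) : z1seq o = z1seq o' -> z2seq o = z2seq o' -> o j = o' j ->
  Kj w1 w2 j o = Kj w1 w2 j o'.
Proof. by rewrite /Kj /x1seq /x2seq => -> -> ->. Qed.

Lemma z1Y (o : OT) i y y' (z1 : Z1) (z2 : Z2) :
  z1seq (upd o i (y, z1, z2)) = z1seq (upd o i (y', z1, z2)).
Proof. by apply/ffunP => k; rewrite !ffunE; case: (k == i). Qed.
Lemma z2Y (o : OT) i y y' (z1 : Z1) (z2 : Z2) :
  z2seq (upd o i (y, z1, z2)) = z2seq (upd o i (y', z1, z2)).
Proof. by apply/ffunP => k; rewrite !ffunE; case: (k == i). Qed.

Definition P w1 w2 (s : {ffun 'I_n -> S1 * S2}) (o : OT) : R :=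
  \prod_(j < n) (PS (s j) * W (x1seq enc1 w1 o j) (x2seq enc2 w2 o j) (s j) (o j)).

Definition mloc x1 x2 z1 z2 :=
  fmin (fun sh : Sh => \sum_(s : S1 * S2) PS s * chZ W x1 x2 s z1 z2 * d s sh).
Definition costG x1 x2 := \sum_(z1 : Z1) \sum_(z2 : Z2) mloc x1 x2 z1 z2.

Lemma sumS_est w1 w2 i e (o : OT) :
  \sum_(s : {ffun 'I_n -> S1 * S2}) P w1 w2 s o * d (s i) e =
  \prod_(j < n | j != i) Kj w1 w2 j o *
  \sum_s PS s * W (x1seq enc1 w1 o i) (x2seq enc2 w2 o i) s (o i) * d s e.
Proof.
pose F := fun (j : 'I_n) (s : S1 * S2) =>
  PS s * W (x1seq enc1 w1 o j) (x2seq enc2 w2 o j) s (o j) * (if j == i then d s e else 1).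
transitivity (\prod_(j < n) \sum_s F j s).
  rewrite bigA_distr_bigA; apply: eq_bigr => s _.
  rewrite /F big_split /=; congr (_ * _).
  rewrite (bigD1 i) //= eqxx [X in _ * X]big1 ?mulr1 // => j /negPf -> //.
rewrite (bigD1 i) //= mulrC; congr (_ * _).
  apply: eq_bigr => j /negPf ji; rewrite /Kj; apply: eq_bigr => s _; by rewrite /F ji mulr1.
by apply: eq_bigr => s _; rewrite /F eqxx.
Qed.

Lemma sumS_cost w1 w2 (c : R) (o : OT) :
  \sum_(s : {ffun 'I_n -> S1 * S2}) P w1 w2 s o * c = \prod_(j < n) Kj w1 w2 j o * c.
Proof. by rewrite -mulr_suml /Kj bigA_distr_bigA. Qed.


Lemma per_w w1 w2 (i : 'I_n) (est : {ffun 'I_n -> Z1} -> {ffun 'I_n -> Z2} -> Sh) :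
  \sum_(s : {ffun 'I_n -> S1 * S2}) \sum_(o : OT)
     P w1 w2 s o * costG (x1seq enc1 w1 o i) (x2seq enc2 w2 o i)
  <= \sum_(s : {ffun 'I_n -> S1 * S2}) \sum_(o : OT)
     P w1 w2 s o * d (s i) (est (z1seq o) (z2seq o)).
Proof.
rewrite exchange_big [X in _ <= X]exchange_big /=.
under eq_bigr do rewrite sumS_cost.
under [X in _ <= X]eq_bigr do rewrite sumS_est.
case: (pickP (fun _ : T => true)) => [t0 _|hT]; last first.
  by rewrite !big1 // => o _; move: (hT (o i)).
pose past (o : OT) := \prod_(j < n | (j < i)%N) Kj w1 w2 j o.
pose Dfut (o : OT) : R := \prod_(j < n | (i < j)%N) (o j == t0)%:R.
pose cst (o : OT) := costG (x1seq enc1 w1 o i) (x2seq enc2 w2 o i).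
have past_upd : forall o t, past (upd o i t) = past o.
  move=> o t; apply: eq_bigr => j ji; apply: Kj_dep => k kj.
  exact: (@upd_below o j.+1 i t ji).
have cst_upd : forall o t, cst (upd o i t) = cst o.
  by move=> o t; rewrite /cst x1upd // x2upd.
have Dfut_upd : forall o t, Dfut (upd o i t) = Dfut o.
  move=> o t; apply: eq_bigr => j ij; rewrite upd_other // -val_eqE /= neq_ltn ij orbT //.
have past_dep : forall o o' : OT, (forall k : 'I_n, (k < i.+1)%N -> o k = o' k) -> past o = past o'.
  move=> o o' e; apply: eq_bigr => j ji; apply: Kj_dep => k kj; apply: e.
  by apply: leq_trans kj _; apply: ltnW.
have Final_R : \sum_(o : OT) \prod_(j < n) Kj w1 w2 j o * cst o =
    \sum_(o : OT) (past o * cst o * Dfut o) * (o i == t0)%:R.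
  transitivity (\sum_(o : OT) (past o * cst o * Kj w1 w2 i o) *
       \prod_(j < n | (i.+1 <= j)%N) Kj w1 w2 j o).
    apply: eq_bigr => o _; rewrite (bigD1 i) //= prod_split3 /past; ring.
  rewrite (ML (m0 := i.+1) (K := Kj w1 w2) t0).
  - transitivity (\sum_(o : OT) (past o * cst o * Dfut o) * Kj w1 w2 i o).
      by apply: eq_bigr => o _; rewrite /Dfut; ring.
    apply: sum_SI; last exact: Kj_kernel.
    by move=> o t; rewrite past_upd cst_upd Dfut_upd.
  - by move=> j _ o; apply: Kj_kernel.
  - by move=> j _; apply: Kj_dep.
  - move=> o o' e; rewrite (past_dep o o' e); congr (_ * _ * _).
      by rewrite /cst (x1dep w1 o o') ?(x2dep w2 o o') // => k ki; apply: e; apply: ltnW.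
    by apply: Kj_dep.
rewrite Final_R [X in _ <= X](sum_upd _ i t0).
set y0 := t0.1.1.
pose mo (o : OT) z1 z2 := mloc (x1seq enc1 w1 o i) (x2seq enc2 w2 o i) z1 z2.
pose Hz (o : OT) z1 z2 := (o i == t0)%:R * past o * mo o z1 z2.
pose fz (o : OT) (z1 : Z1) (z2 : Z2) := \prod_(j < n | (i < j)%N) Kj w1 w2 j (upd o i (y0, z1, z2)).
have Pm_split : forall o t, \prod_(j < n | j != i) Kj w1 w2 j (upd o i t) =
    past o * \prod_(j < n | (i < j)%N) Kj w1 w2 j (upd o i t).
  by move=> o t; rewrite prod_split3; congr (_ * _); exact: past_upd.
apply: (@le_trans _ _ (\sum_(o : OT) (o i == t0)%:R *
   \sum_(z1 : Z1) \sum_(z2 : Z2)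
     \prod_(j < n | j != i) Kj w1 w2 j (upd o i (y0, z1, z2)) * mo o z1 z2)).
  rewrite le_eqVlt; apply/orP; left; apply/eqP.
  transitivity (\sum_(o : OT) \sum_(z1 : Z1) \sum_(z2 : Z2) Hz o z1 z2 * Dfut o).
    apply: eq_bigr => o _.
    transitivity (((o i == t0)%:R * past o * Dfut o) * cst o); first by ring.
    rewrite /cst /costG mulr_sumr; apply: eq_bigr => z1 _; rewrite mulr_sumr.
    by apply: eq_bigr => z2 _; rewrite /Hz /mo; ring.
  transitivity (\sum_(o : OT) \sum_(z1 : Z1) \sum_(z2 : Z2) Hz o z1 z2 * fz o z1 z2); last first.
    apply: eq_bigr => o _; rewrite mulr_sumr; apply: eq_bigr => z1 _; rewrite mulr_sumr.
    by apply: eq_bigr => z2 _; rewrite Pm_split /Hz /fz -!mulrA [mo o z1 z2 * _]mulrC.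
  rewrite [LHS](exch3 _ _ _ _ (fun o z1 z2 => Hz o z1 z2 * Dfut o)).
  rewrite [RHS](exch3 _ _ _ _ (fun o z1 z2 => Hz o z1 z2 * fz o z1 z2)).
  apply: eq_bigr => z1 _; apply: eq_bigr => z2 _.
  symmetry.
  have hH : dep (fun o => Hz o z1 z2) i.+1.
    move=> o o' e; rewrite /Hz (past_dep o o' e) (e i) //; congr (_ * _).
    by rewrite /mo (x1dep w1 o o') ?(x2dep w2 o o') // => k ki; apply: e; apply: ltnW.
  apply: (ML (m0 := i.+1) (K := fun j o => Kj w1 w2 j (upd o i (y0, z1, z2))) t0 _ _ hH).
    move=> j ij o /=.
    have ji : i != j by rewrite -val_eqE /= neq_ltn ij.
    under eq_bigr do rewrite upd_comm //.
    exact: Kj_kernel.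
  move=> j ij o o' e /=; apply: Kj_dep; exact: upd_agree.
apply: ler_sum => o _; apply: ler_wpM2l; first exact: ler0n.
rewrite sum_triple [X in _ <= X]exch3.
apply: ler_sum => z1 _; apply: ler_sum => z2 _.
have PmY : forall y, \prod_(j < n | j != i) Kj w1 w2 j (upd o i (y, z1, z2)) =
    \prod_(j < n | j != i) Kj w1 w2 j (upd o i (y0, z1, z2)).
  move=> y; apply: eq_bigr => j ji; apply: Kj_z; [exact: z1Y | exact: z2Y |].
  by rewrite !upd_other.
under [X in _ <= X]eq_bigr do rewrite PmY.
rewrite -mulr_sumr; apply: ler_wpM2l.
  by apply: prodr_ge0 => j _; apply: Kj_ge0.
under eq_bigr do (under eq_bigr do rewrite x1upd // x2upd // upd_same (z1Y _ _ _ y0) (z2Y _ _ _ y0)).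
rewrite exchange_big /=.
under eq_bigr do rewrite -mulr_suml -mulr_sumr.
exact: fmin_le.
Qed.

Lemma per_i (i : 'I_n)
  (est : 'I_M1 -> 'I_M2 -> {ffun 'I_n -> Z1} -> {ffun 'I_n -> Z2} -> Sh) :
  expect PS W enc1 enc2 (fun w1 w2 s o => costG (x1seq enc1 w1 o i) (x2seq enc2 w2 o i))
  <= expect PS W enc1 enc2 (fun w1 w2 s o => d (s i) (est w1 w2 (z1seq o) (z2seq o))).
Proof.
rewrite /expect; apply: ler_sum => w1 _; apply: ler_sum => w2 _.
have E : forall g : {ffun 'I_n -> S1 * S2} -> OT -> R,
  \sum_(s : {ffun 'I_n -> S1 * S2}) \sum_(o : OT) joint PS W enc1 enc2 w1 w2 s o * g s o =
  (M1 * M2)%:R^-1 * \sum_(s : {ffun 'I_n -> S1 * S2}) \sum_(o : OT) P w1 w2 s o * g s o.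
  move=> g; rewrite mulr_sumr; apply: eq_bigr => s _; rewrite mulr_sumr.
  by apply: eq_bigr => o _; rewrite /joint -mulrA.
rewrite (E (fun s o => costG (x1seq enc1 w1 o i) (x2seq enc2 w2 o i))).
rewrite (E (fun s o => d (s i) (est w1 w2 (z1seq o) (z2seq o)))).
apply: ler_wpM2l; first by rewrite invr_ge0 ler0n.
exact: per_w.
Qed.
End M.

Lemma expect_lin (R : realFieldType) (X1 X2 Z1 Z2 Y S1 S2 : finType) (n M1 M2 : nat)
  (PS : S1 * S2 -> R) (W : X1 -> X2 -> S1 * S2 -> Y * Z1 * Z2 -> R)
  (enc1 : encoder n M1 Z1 X1) (enc2 : encoder n M2 Z2 X2) (c : R)
  (f : 'I_n -> 'I_M1 -> 'I_M2 -> {ffun 'I_n -> S1 * S2} -> {ffun 'I_n -> Y * Z1 * Z2} -> R) :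
  expect PS W enc1 enc2 (fun w1 w2 s o => c * \sum_(i < n) f i w1 w2 s o) =
  c * \sum_(i < n) expect PS W enc1 enc2 (f i).
Proof.
transitivity (c * expect PS W enc1 enc2 (fun w1 w2 s o => \sum_(i < n) f i w1 w2 s o)).
  rewrite /expect mulr_sumr; apply: eq_bigr => w1 _; rewrite mulr_sumr.
  apply: eq_bigr => w2 _; rewrite mulr_sumr; apply: eq_bigr => s _; rewrite mulr_sumr.
  by apply: eq_bigr => o _; rewrite mulrCA.
congr (_ * _); rewrite /expect.
rewrite [RHS]exchange_big; apply: eq_bigr => w1 _.
rewrite [RHS]exchange_big; apply: eq_bigr => w2 _.
rewrite [RHS]exchange_big; apply: eq_bigr => s _.
rewrite [RHS]exchange_big; apply: eq_bigr => o _.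
by rewrite mulr_sumr.
Qed.

Theorem mainTheorem5 (R : realFieldType)
  (X1 X2 Z1 Z2 Y S1 S2 Sh1 Sh2 : finType) (n M1 M2 : nat)
  (PS : S1 * S2 -> R) (W : X1 -> X2 -> S1 * S2 -> Y * Z1 * Z2 -> R)
  (d1 : S1 -> Sh1 -> R) (d2 : S2 -> Sh2 -> R)
  (enc1 : encoder n M1 Z1 X1) (enc2 : encoder n M2 Z2 X2)
  (psi1 : {ffun 'I_n -> X1} -> {ffun 'I_n -> Z1} -> {ffun 'I_n -> Sh1})
  (psi2 : {ffun 'I_n -> X2} -> {ffun 'I_n -> Z2} -> {ffun 'I_n -> Sh2})
  (hM1 : (0 < M1)%N) (hM2 : (0 < M2)%N)
  (hPS0 : forall s, 0 <= PS s) (hPS1 : \sum_s PS s = 1)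
  (hW0 : forall x1 x2 s o, 0 <= W x1 x2 s o)
  (hW1 : forall x1 x2 s, \sum_o W x1 x2 s o = 1)
  (hd1 : forall s sh, 0 <= d1 s sh) (hd2 : forall s sh, 0 <= d2 s sh) :
  expect PS W enc1 enc2
    (fun w1 w2 s o => n%:R^-1 * \sum_(i < n)
        d1 (s i).1 (psi1 (x1seq enc1 w1 o) (z1seq o) i))
  >= n%:R^-1 * \sum_(i < n)
       expect PS W enc1 enc2
         (fun w1 w2 s o => cost1 PS W d1 (x1seq enc1 w1 o i) (x2seq enc2 w2 o i))
  /\
  expect PS W enc1 enc2
    (fun w1 w2 s o => n%:R^-1 * \sum_(i < n)
        d2 (s i).2 (psi2 (x2seq enc2 w2 o) (z2seq o) i))
  >= n%:R^-1 * \sum_(i < n)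
       expect PS W enc1 enc2
         (fun w1 w2 s o => cost2 PS W d2 (x1seq enc1 w1 o i) (x2seq enc2 w2 o i)).
Proof.
split.
- rewrite (@expect_lin _ _ _ _ _ _ _ _ _ _ _ _ _ _ _ _ (fun i w1 w2 s o => d1 (s i).1 (psi1 (x1seq enc1 w1 o) (z1seq o) i))).
  apply: ler_wpM2l; first by rewrite invr_ge0 ler0n.
  apply: ler_sum => i _.
  exact: (@per_i _ _ _ _ _ _ _ _ _ _ _ _ _ _ _ _ hPS0 hPS1 hW0 hW1 (fun s sh => d1 s.1 sh) i
            (fun w1 w2 z1 z2 => psi1 (inputs enc1 w1 z1) z1 i)).
- rewrite (@expect_lin _ _ _ _ _ _ _ _ _ _ _ _ _ _ _ _ (fun i w1 w2 s o => d2 (s i).2 (psi2 (x2seq enc2 w2 o) (z2seq o) i))).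
  apply: ler_wpM2l; first by rewrite invr_ge0 ler0n.
  apply: ler_sum => i _.
  exact: (@per_i _ _ _ _ _ _ _ _ _ _ _ _ _ _ _ _ hPS0 hPS1 hW0 hW1 (fun s sh => d2 s.2 sh) i
            (fun w1 w2 z1 z2 => psi2 (inputs enc2 w2 z2) z2 i)).
Qed.
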